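(* Let $K$ be a field with algebraic closure $\overline K$, let $n\ge2$ and $1\le s<n$ be integers, and let $b\ge2$ be an integer. For a degree pattern $\mathbf d=(d_1,\dots,d_s)$ with $d_1\ge\cdots\ge d_s\ge1$, $d_1\ge2$, write $\delta(\mathbf d)=d_1\cdots d_s$, $D_i(\mathbf d)=\binom{d_i+n}{n}-1$ and $\mathbb P^{\mathbf D(\mathbf d)}_{\overline K}=\mathbb P^{D_1(\mathbf d)}_{\overline K}\times\cdots\times\mathbb P^{D_s(\mathbf d)}_{\overline K}$, and let $\mathbf d^{(b)}=(b,1,\dots,1)$. Then for every degree pattern $\mathbf d\ne\mathbf d^{(b)}$ with $\delta(\mathbf d)=b$, $$\dim\mathbb P^{\mathbf D(\mathbf d^{(b)})}_{\overline K}\ge\dim\mathbb P^{\mathbf D(\mathbf d)}_{\overline K}+g(b).$$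
   Context: $g(b)=0$ if $b$ is prime; otherwise $g(b)=\binom{b+n}{n}-\binom{b/\rho+n}{n}-\binom{\rho+n}{n}$, where $\rho$ is the smallest prime dividing $b$. *)

(* Defs.v *)
From mathcomp Require Import all_boot all_order all_algebra.
Import GRing.Theory Num.Theory.

Definition degree_pattern (s : nat) (d : seq nat) : bool :=
  [&& size d == s, sorted geq d, all (fun x => 0 < x) d & 2 <= head 0 d].

Definition delta (d : seq nat) : nat := \prod_(x <- d) x.

Definition Dcomp (n di : nat) : int := ('C(di + n, n))%:Z - 1.

(* dim of P^{D_1} x ... x P^{D_s} = D_1 + ... + D_s *)
Definition dimPD (n : nat) (d : seq nat) : int :=
  (\sum_(x <- d) Dcomp n x)%R.

Definition dpat_b (s b : nat) : seq nat := b :: nseq s.-1 1.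

Definition g (n b : nat) : int :=
  if prime b then 0%R
  else (('C(b + n, n))%:Z - ('C(b %/ pdiv b + n, n))%:Z - ('C(pdiv b + n, n))%:Z)%R.

(* Main.v *)
Require Import Defs.
From mathcomp Require Import all_boot all_order all_algebra.
From mathcomp Require Import zify.
Import GRing.Theory Num.Theory.

Lemma ff_mono n t u : t <= u -> (t + n) ^_ n <= (u + n) ^_ n.
Proof.
move=> htu; elim: n => [|n IH]; first by rewrite !ffactn0.
rewrite !addnS !ffactSS; apply: leq_mul => //; lia.
Qed.

Lemma ff_prod n a c x y : 0 < a -> a <= x -> x <= y -> a * c = x * y ->
  (x + n) ^_ n * (y + n) ^_ n <= (a + n) ^_ n * (c + n) ^_ n.
Proof.
move=> a0 ax xy hc.
have hs : x + y <= a + c.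
  have : a * (x + y) <= a * (a + c) by nia.
  by rewrite leq_pmul2l.
elim: n => [|n IH]; first by rewrite !ffactn0.
rewrite !addnS !ffactSS.
have h2 : (x + n).+1 * (y + n).+1 <= (a + n).+1 * (c + n).+1 by nia.
have := leq_mul h2 IH.
rewrite -!mulnA. rewrite [(y + n).+1 * _]mulnA [(y + n).+1 * _]mulnC -!mulnA.
rewrite [(c + n).+1 * _]mulnA [(c + n).+1 * _]mulnC -!mulnA //.
Qed.

Lemma sum_from_prod A X Y C : 0 < A -> A <= X -> X <= Y -> X * Y <= A * C ->
  X + Y <= A + C.
Proof.
move=> A0 AX XY h.
have : A * (X + Y) <= A * (A + C) by nia.
by rewrite leq_pmul2l.
Qed.

Lemma bin_exch n a c x y : 0 < a -> a <= x -> x <= y -> a * c = x * y ->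
  'C(x + n, n) + 'C(y + n, n) <= 'C(a + n, n) + 'C(c + n, n).
Proof.
move=> a0 ax xy hc.
rewrite -(leq_pmul2r (fact_gt0 n)) !mulnDl !bin_ffact.
apply: sum_from_prod.
- by rewrite ffact_gt0 leq_addl.
- exact: ff_mono.
- exact: ff_mono.
- exact: ff_prod.
Qed.

Lemma superadd n x y : 0 < x -> 0 < y ->
  'C(x + n, n) + 'C(y + n, n) <= 'C(x * y + n, n) + n.+1.
Proof.
wlog xy : x y / x <= y => [H x0 y0|x0 y0].
  case: (leqP x y) => h; first exact: H.
  by rewrite addnC mulnC; apply: H => //; apply: ltnW.
have -> : n.+1 = 'C(1 + n, n) by rewrite add1n binSn.
rewrite [X in _ <= X]addnC.
by apply: bin_exch => //; rewrite mul1n.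
Qed.

Lemma seq_super n (e : seq nat) : all (fun x => 0 < x) e ->
  \sum_(x <- e) 'C(x + n, n) + n.+1 <= 'C(\prod_(x <- e) x + n, n) + size e * n.+1.
Proof.
elim: e => [|x e IH] /=.
  by move=> _; rewrite !big_nil add1n binSn add0n mul0n addn0.
case/andP=> x0 he; rewrite !big_cons.
have hp : 0 < \prod_(y <- e) y.
  elim: e he {IH} => [|z e IHe] /=; first by rewrite big_nil.
  by case/andP=> z0 he; rewrite big_cons muln_gt0 z0 IHe.
have := @superadd n _ _ x0 hp. have := IH he. lia.
Qed.

Lemma sumZ n (e : seq nat) :
  dimPD n e = ((\sum_(x <- e) 'C(x + n, n))%:Z - (size e)%:Z)%R.
Proof.
rewrite /dimPD; elim: e => [|x e IH]; first by rewrite !big_nil.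
rewrite !big_cons IH /Dcomp /=. rewrite PoszD -addn1 PoszD. lia.
Qed.

Lemma sum_nseq n k : \sum_(x <- nseq k 1) 'C(x + n, n) = k * n.+1.
Proof.
elim: k => [|k IH]; first by rewrite big_nil.
by rewrite /= big_cons IH add1n binSn mulSn.
Qed.

Lemma prod1_nseq (r : seq nat) : \prod_(x <- r) x = 1 -> r = nseq (size r) 1.
Proof.
elim: r => [|z e IHe] //=; rewrite big_cons => /eqP; rewrite muln_eq1 => /andP[/eqP -> /eqP h].
by rewrite -IHe.
Qed.

Theorem corollary5p2 (n s b : nat) (d : seq nat) :
  2 <= n -> 1 <= s < n -> 2 <= b ->
  degree_pattern s d -> d != dpat_b s b -> delta d = b ->
  (dimPD n d + g n b <= dimPD n (dpat_b s b))%R.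
Proof.
move=> n2 /andP[s1 sn] b2 /and4P[/eqP sz _ pos hd] neq del.
case: d sz pos hd neq del => [|d1 r] sz; first by move: sz s1 => <-.
rewrite /= => /andP[d10 rpos] hd neq.
rewrite /delta big_cons => del.
set R := \prod_(x <- r) x in del.
have R0 : 0 < R.
  by move: del; rewrite -/R; case: R => //; rewrite muln0 => hb; move: b2; rewrite -hb.
have R2 : 2 <= R.
  case: (leqP 2 R) => // hR1; have hR : R = 1 by lia.
  exfalso; move/negP: neq; apply; rewrite /dpat_b.
  have hr : r = nseq s.-1 1.
    rewrite -sz /=; apply: prod1_nseq; by rewrite -/R.
  by rewrite hr -del hR muln1.
have hsup := @seq_super n r rpos.
rewrite -/R in hsup.
have hexch : 'C(d1 + n, n) + 'C(R + n, n) <= 'C(pdiv b + n, n) + 'C(b %/ pdiv b + n, n).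
  have pdv : pdiv b %| b := pdiv_dvd b.
  have pd0 := pdiv_gt0 b.
  have hc : pdiv b * (b %/ pdiv b) = d1 * R by rewrite -del mulnC divnK // del.
  have p1 : pdiv b <= d1 by apply: pdiv_min_dvd => //; rewrite -del dvdn_mulr.
  have p2 : pdiv b <= R by apply: pdiv_min_dvd => //; rewrite -del dvdn_mull.
  case: (leqP d1 R) => hdR.
    exact: bin_exch.
  rewrite [X in X <= _]addnC; apply: (@bin_exch n _ _ _ _ pd0 p2 (ltnW hdR)); by rewrite hc mulnC.
rewrite !sumZ /dpat_b /= !big_cons sum_nseq size_nseq -sz /=.
rewrite /g; case: ifP => pb.
  exfalso.
  have : d1 %| b by rewrite -del dvdn_mulr.
  case/primeP: pb => _ /(_ d1) H /H /orP[]/eqP; first lia.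
  move=> e; move: del; rewrite e -{2}(muln1 b) => /eqP; rewrite eqn_mul2l; lia.
rewrite -/R in hsup. lia.
Qed.
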